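(* Let $p$ be a prime and $r \in \mathbb{N}$ with $r\ge 2$. Let $k \in \mathbb{N}$ and let $m \in \mathbb{N}$ such that $r(p-1)+1< 2p^m$. Then \[\mathsf{D}_k(C_p^r)\le \min \{(k(r-1)+1)p - r+1,\ (k-1)p^m + r(p-1)+1\}.\]
   Context: $C_p^r$ is the elementary abelian $p$-group of rank $r$. A sequence over a finite abelian group $G$ is a finite unordered list of elements with repetitions; zero-sum means its terms sum to $0$. $\mathsf{D}_k(G)$ is the smallest $\ell$ such that every sequence over $G$ of length at least $\ell$ has $k$ disjoint non-empty zero-sum subsequences. *)

(* Defs.v *)
From mathcomp Require Import all_boot all_order all_algebra.
From Stdlib Require Import ClassicalEpsilon.
Set Implicit Arguments. Unset Strict Implicit. Unset Printing Implicit Defensive.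
Import GRing.Theory.
Local Open Scope ring_scope.

(* A subsequence is given by a set of positions
   I : {set 'I_(size s)}; subsequences are disjoint iff their position sets
   are disjoint. *)
Definition has_k_disjoint_zero_sums (G : zmodType) (k : nat) (s : seq G) : Prop :=
  exists F : 'I_k -> {set 'I_(size s)},
    (forall j, F j != set0) /\
    (forall j, \sum_(i in F j) s`_i = 0) /\
    (forall j j', j != j' -> [disjoint F j & F j']).

Definition Dk_prop (G : finZmodType) (k l : nat) : Prop :=
  forall s : seq G, (l <= size s)%N -> has_k_disjoint_zero_sums k s.

Definition Dk_predb (G : finZmodType) (k : nat) : pred nat :=
  fun l => if excluded_middle_informative (Dk_prop G k l) then true else false.

(* D_k(G) = the smallest such l (defaults to 0 if no such l exists,
   which never happens for finite G). *)
Definition Dk (G : finZmodType) (k : nat) : nat :=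
  match excluded_middle_informative (exists l, Dk_predb G k l) with
  | left H => ex_minn H
  | right _ => 0%N
  end.

(* Main.v *)
Require Import Defs.
From mathcomp Require Import all_boot all_order all_algebra all_field.
From mathcomp Require Import zify.
From Stdlib Require Import ClassicalEpsilon.
Set Implicit Arguments. Unset Strict Implicit. Unset Printing Implicit Defensive.
Import GRing.Theory.
Local Open Scope ring_scope.

Definition lowdeg (R : comNzRingType) n (d : nat) (f : {set 'I_n} -> R) : Prop :=
  exists (I : finType) (c : I -> {set 'I_n}) (h : I -> {set 'I_n} -> R),
    [/\ forall i, (#|c i| <= d)%N, forall i T, h i T = h i (T :&: c i)
      & forall T, f T = \sum_i h i T].

Lemma lowdeg_ext (R : comNzRingType) n d (f g : {set 'I_n} -> R) :
  (forall T, f T = g T) -> lowdeg d f -> lowdeg d g.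
Proof.
move=> e [I [c [h [H1 H2 H3]]]]; exists I, c, h; split=> // T.
by rewrite -e.
Qed.

Lemma lowdeg_mono (R : comNzRingType) n d d' (f : {set 'I_n} -> R) :
  (d <= d')%N -> lowdeg d f -> lowdeg d' f.
Proof.
move=> le [I [c [h [H1 H2 H3]]]]; exists I, c, h; split=> // i.
exact: leq_trans (H1 i) le.
Qed.

Lemma lowdeg_const (R : comNzRingType) n (a : R) :
  lowdeg 0 (fun _ : {set 'I_n} => a).
Proof.
exists 'I_1, (fun _ => set0), (fun _ _ => a); split=> //.
  by move=> i; rewrite cards0.
by move=> T; rewrite big_ord1.
Qed.

Lemma lowdeg_ind (R : comNzRingType) n (A : {set 'I_n}) :
  lowdeg #|A| (fun T => ((A \subset T)%:R : R)).
Proof.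
exists 'I_1, (fun _ => A), (fun _ (T : {set 'I_n}) => ((A \subset T)%:R : R)); split=> //.
  by move=> _ T; rewrite subsetI subxx andbT.
by move=> T; rewrite big_ord1.
Qed.

Lemma lowdeg_add (R : comNzRingType) n d (f g : {set 'I_n} -> R) :
  lowdeg d f -> lowdeg d g -> lowdeg d (fun T => f T + g T).
Proof.
move=> [I [c [h [H1 H2 H3]]]] [J [c' [h' [H1' H2' H3']]]].
exists (I + J)%type, (fun x => match x with inl i => c i | inr j => c' j end),
  (fun x T => match x with inl i => h i T | inr j => h' j T end); split.
- by case.
- by case=> [i|j] T; [apply: H2|apply: H2'].
- by move=> T; rewrite big_sumType /= H3 H3'.
Qed.

Lemma lowdeg_opp (R : comNzRingType) n d (f : {set 'I_n} -> R) :
  lowdeg d f -> lowdeg d (fun T => - f T).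
Proof.
move=> [I [c [h [H1 H2 H3]]]]; exists I, c, (fun i T => - h i T); split=> //.
  by move=> i T; rewrite H2.
by move=> T; rewrite H3 sumrN.
Qed.

Lemma lowdeg_mul (R : comNzRingType) n d e (f g : {set 'I_n} -> R) :
  lowdeg d f -> lowdeg e g -> lowdeg (d + e) (fun T => f T * g T).
Proof.
move=> [I [c [h [H1 H2 H3]]]] [J [c' [h' [H1' H2' H3']]]].
exists (I * J)%type, (fun x => c x.1 :|: c' x.2),
  (fun x T => h x.1 T * h' x.2 T); split.
- move=> [i j] /=; rewrite cardsU; apply: leq_trans (leq_subr _ _) _.
  exact: leq_add.
- move=> [i j] T /=.
  rewrite (H2 i (T :&: _)) (H2' j (T :&: _)) -!setIA setUK (setUC (c i)) setUK.
  by rewrite -H2 -H2'.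
- move=> T; rewrite H3 H3' big_distrlr /= pair_bigA /=.
  by [].
Qed.

Lemma lowdeg_exp (R : comNzRingType) n d (f : {set 'I_n} -> R) k :
  lowdeg d f -> lowdeg (d * k) (fun T => f T ^+ k).
Proof.
move=> H; elim: k => [|k IH].
  by rewrite muln0; apply: lowdeg_ext (lowdeg_const _ 1) => T; rewrite expr0.
rewrite mulnS; apply: lowdeg_ext (lowdeg_mul H IH) => T.
by rewrite exprS.
Qed.

Lemma lowdeg_sum (R : comNzRingType) n d (K : Type) (s : seq K) (P : pred K)
  (F : K -> {set 'I_n} -> R) :
  (forall k, P k -> lowdeg d (F k)) ->
  lowdeg d (fun T => \sum_(k <- s | P k) F k T).
Proof.
move=> H; elim: s => [|x s IH].
  apply: lowdeg_mono (leq0n d) _.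
  by apply: lowdeg_ext (lowdeg_const _ 0) => T; rewrite big_nil.
case Px: (P x).
  by apply: lowdeg_ext (lowdeg_add (H x Px) IH) => T; rewrite big_cons Px.
by apply: lowdeg_ext IH => T; rewrite big_cons Px.
Qed.


Definition tog n (x : 'I_n) (T : {set 'I_n}) :=
  if x \in T then T :\ x else x |: T.

Lemma togK n (x : 'I_n) : involutive (tog x).
Proof.
move=> T; rewrite {2}/tog; case: ifP => xT; rewrite /tog.
  by rewrite setD11 setD1K.
by rewrite setU11 setU1K // xT.
Qed.

Lemma in_tog n (x : 'I_n) T : (x \in tog x T) = (x \notin T).
Proof. by rewrite /tog; case: ifP => xT; rewrite ?setD11 ?setU11. Qed.

Lemma SC_one (R : comNzRingType) n (B U : {set 'I_n}) (h : {set 'I_n} -> R) :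
  (forall T : {set 'I_n}, h T = h (T :&: B)) -> (#|B| < #|U|)%N ->
  \sum_(T : {set 'I_n} | T \subset U) (-1) ^+ #|T| * h T = 0.
Proof.
move=> hB ltBU.
have /subsetPn [x xU xB] : ~~ (U \subset B).
  by apply/negP => /subset_leq_card; rewrite leqNgt ltBU.
pose F (T : {set 'I_n}) := ((T \subset U)%:R * ((-1) ^+ #|T| * h T)) : R.
have eU : [set x] :|: U = U by apply/setUidPr; rewrite sub1set.
have FN (T : {set 'I_n}) : F (tog x T) = - F T.
  rewrite /F /tog; case: ifP => xT.
  - rewrite subDset eU (hB (T :\ x)) (hB T).
    have -> : (T :\ x) :&: B = T :&: B.
      apply/setP=> y; rewrite !inE; case: (y =P x) => [->|] //=.
      by rewrite (negbTE xB) andbF.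
    have := cardsD1 x T; rewrite xT add1n => ->.
    by rewrite exprS mulN1r mulNr mulrN opprK.
  - rewrite subUset sub1set xU /= (hB (x |: T)) (hB T).
    have -> : (x |: T) :&: B = T :&: B.
      apply/setP=> y; rewrite !inE; case: (y =P x) => [->|] //=.
      by rewrite (negbTE xB) andbF.
    rewrite cardsU1 xT add1n.
    by rewrite exprS mulN1r mulNr mulrN.
have -> : \sum_(T : {set 'I_n} | T \subset U) (-1) ^+ #|T| * h T = \sum_T F T.
  rewrite big_mkcond; apply: eq_bigr => T _.
  by rewrite /F; case: (T \subset U); rewrite ?mul1r ?mul0r.

rewrite (bigID (fun T : {set 'I_n} => x \in T)) /=.
rewrite (reindex_inj (inv_inj (@togK n x))) /=.
under eq_bigl do rewrite in_tog.
under eq_bigr do rewrite FN.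
by rewrite sumrN addNr.
Qed.

Lemma SC (R : comNzRingType) n d (f : {set 'I_n} -> R) (U : {set 'I_n}) :
  lowdeg d f -> (d < #|U|)%N ->
  \sum_(T : {set 'I_n} | T \subset U) (-1) ^+ #|T| * f T = 0.
Proof.
move=> [I [c [h [H1 H2 H3]]]] ltdU.
under eq_bigr do rewrite H3 mulr_sumr.
rewrite exchange_big /=; apply: big1 => i _.
apply: SC_one; first exact: H2.
exact: leq_ltn_trans (H1 i) ltdU.
Qed.


Lemma Fp_ind p (x : 'F_p) : prime p -> 1 - x ^+ p.-1 = (x == 0)%:R.
Proof.
move=> pp; have p1 : (0 < p.-1)%N by have := prime_gt1 pp; case: (p) => [|[|]].
case: (x =P 0) => [->|/eqP nx]; first by rewrite expr0n (gtn_eqF p1) subr0.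
have e : x ^+ p = x by have := expf_card x; rewrite card_Fp.
have : x * x ^+ p.-1 = x * 1 by rewrite -exprS prednK ?prime_gt0 // e mulr1.
by move=> /(mulfI nx) ->; rewrite subrr.
Qed.

Lemma prod_ind (R : comNzRingType) r (b : 'I_r -> bool) :
  \prod_(j < r) ((b j)%:R : R) = ([forall j, b j])%:R.
Proof.
case: (boolP [forall j, b j]) => [/forallP H | /forallPn [j /negbTE bj]].
  by apply: big1 => j _; rewrite H.
by rewrite (bigD1 j) //= bj mul0r.
Qed.

Lemma lowdeg_prod (R : comNzRingType) n d (K : Type) (s : seq K)
  (F : K -> {set 'I_n} -> R) :
  (forall k, lowdeg d (F k)) ->
  lowdeg (d * size s) (fun T => \prod_(k <- s) F k T).
Proof.
move=> H; elim: s => [|x s IH].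
  by rewrite muln0; apply: lowdeg_ext (lowdeg_const _ 1) => T; rewrite big_nil.
rewrite /= mulnS; apply: lowdeg_ext (lowdeg_mul (H x) IH) => T.
by rewrite big_cons.
Qed.

Lemma lowdeg_lin (R : comNzRingType) n (a : 'I_n -> R) :
  lowdeg 1 (fun T => \sum_(i in T) a i).
Proof.
have H i : lowdeg 1 (fun T : {set 'I_n} => a i * (([set i] \subset T)%:R)).
  have := lowdeg_mul (lowdeg_const n (a i)) (lowdeg_ind R [set i]).
  by rewrite cards1.
have := @lowdeg_sum R n 1 'I_n (index_enum 'I_n) predT
  (fun i T => a i * (([set i] \subset T)%:R)) (fun i _ => H i).
apply: lowdeg_ext => T /=.
rewrite [RHS]big_mkcond; apply: eq_bigr => i _.
by rewrite sub1set; case: (i \in T); rewrite ?mulr1 ?mulr0.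
Qed.

Lemma lowdeg_zero p r n (g : 'I_n -> 'rV['F_p]_r) : prime p ->
  lowdeg (p.-1 * r) (fun T => ((\sum_(i in T) g i) == 0)%:R : 'F_p).
Proof.
move=> pp.
have Hj (j : 'I_r) : lowdeg p.-1
    (fun T : {set 'I_n} => 1 - (\sum_(i in T) g i 0 j) ^+ p.-1 : 'F_p).
  have := lowdeg_exp p.-1 (lowdeg_lin (fun i => g i 0 j)); rewrite mul1n.
  move/lowdeg_opp; apply: lowdeg_add.
  exact: lowdeg_mono (lowdeg_const _ _).
have := @lowdeg_prod 'F_p n p.-1 'I_r (index_enum 'I_r) _ Hj.
have sz : size (index_enum 'I_r) = r.
  by rewrite -[in RHS](card_ord r) cardE -deprecated_filter_index_enum filter_predT.
rewrite sz; apply: lowdeg_ext => T.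
under eq_bigr do rewrite Fp_ind //.
rewrite prod_ind; congr ((nat_of_bool _)%:R).
apply/idP/idP => [/forallP H|/eqP H]; last first.
  by apply/forallP => j; rewrite -summxE H mxE.
apply/eqP/matrixP => i j; rewrite ord1 summxE mxE; exact/eqP/H.
Qed.


Lemma bin_pdvd p j i : prime p -> (0 < i < p ^ j)%N -> (p %| 'C(p ^ j, i))%N.
Proof.
move=> pp /andP [i0 ilt].
have e := mul_bin_diag (p ^ j) i.-1; rewrite prednK // in e.
case: (boolP (p %| 'C(p ^ j, i))%N) => // npC; exfalso.
have cop : coprime (p ^ j) 'C(p ^ j, i) by apply: coprimeXl; rewrite prime_coprime.
have : (p ^ j %| i * 'C(p ^ j, i))%N by rewrite -e dvdn_mulr.
rewrite Gauss_dvdl // => /(dvdn_leq i0).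
by rewrite leqNgt ilt.
Qed.

Lemma binF p j u : prime p -> ('C(u * p ^ j, p ^ j)%:R : 'F_p) = u%:R.
Proof.
move=> pp; have q0 : (0 < p ^ j)%N by rewrite expn_gt0 prime_gt0.
elim: u => [|u IH]; first by rewrite mul0n bin_small.
rewrite mulSn -binomial.Vandermonde natr_sum (bigD1 ord0) //= (bigD1 ord_max) /=; last first.
  by apply/negP => /eqP /(congr1 val) /= h; move: q0; rewrite h.
rewrite big1 ?addr0; last first.
  move=> i /andP [ni0 nim]; rewrite natrM.
  have i0 : (0 < val i)%N.
    by rewrite lt0n; apply: contra ni0 => /eqP h; apply/eqP/val_inj.
  have iq : (val i < p ^ j)%N.
    have := ltn_ord i; rewrite ltnS leq_eqVlt => /orP [/eqP h|//].
    by case/negP: nim; apply/eqP/val_inj.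
  have : (p %| 'C(p ^ j, i))%N by apply: bin_pdvd => //; rewrite i0 iq.
  by rewrite (dvdn_pcharf (pchar_Fp pp)) => /eqP ->; rewrite mul0r.
rewrite subn0 subnn bin0 binn !mul1n IH.
by rewrite bin0 [RHS]mulrS addrC.
Qed.

Lemma dvd_step p m t : prime p ->
  (p ^ m.+1 %| t)%N = (p ^ m %| t)%N && (p %| 'C(t, p ^ m))%N.
Proof.
move=> pp; case: (boolP (p ^ m %| t)%N) => /= [/dvdnP [u ->] | nd].
  rewrite expnSr (mulnC u) dvdn_pmul2l ?expn_gt0 ?prime_gt0 //.
  by rewrite !(dvdn_pcharf (pchar_Fp pp)) [(p ^ m * u)%N]mulnC binF.
apply/negP => H; case/negP: nd; apply: dvdn_trans H.
by apply: dvdn_exp2l.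
Qed.

Lemma lowdeg_binom (R : comNzRingType) n a :
  lowdeg a (fun T : {set 'I_n} => ('C(#|T|, a))%:R : R).
Proof.
have H (A : {set 'I_n}) : #|A| == a -> lowdeg a (fun T => (A \subset T)%:R : R).
  by move/eqP <-; apply: lowdeg_ind.
have := @lowdeg_sum R n a _ (index_enum {set 'I_n}) (fun A => #|A| == a)
  (fun A T => (A \subset T)%:R) H.
apply: lowdeg_ext => T.
rewrite -cards_draws -sum1_card natr_sum [LHS]big_mkcond [RHS]big_mkcond.
apply: eq_bigr => A _; rewrite !inE.
by case: (A \subset T); case: (#|A| == a).
Qed.

Lemma lowdeg_pdiv p m n : prime p ->
  lowdeg (p ^ m - 1) (fun T : {set 'I_n} => (p ^ m %| #|T|)%:R : 'F_p).
Proof.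
move=> pp; elim: m => [|m IH].
  by rewrite expn0 subnn; apply: lowdeg_ext (lowdeg_const _ 1) => T; rewrite dvd1n.
have Hb := lowdeg_exp p.-1 (@lowdeg_binom 'F_p n (p ^ m)).
have Hc := lowdeg_add (lowdeg_mono (leq0n _) (lowdeg_const n (1 : 'F_p)))
  (lowdeg_opp Hb).
have := lowdeg_mul IH Hc.
have -> : (p ^ m - 1 + p ^ m * p.-1 = p ^ m.+1 - 1)%N.
  have h : (0 < p ^ m)%N by rewrite expn_gt0 prime_gt0.
  have := prime_gt0 pp => h'.
  rewrite expnSr; set x := (p ^ m)%N in h *; nia.
apply: lowdeg_ext => T /=.
rewrite Fp_ind // dvd_step // -(dvdn_pcharf (pchar_Fp pp)).
by case: (p ^ m %| #|T|)%N; case: (p %| _)%N; rewrite ?mulr1 ?mulr0 ?mul0r.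
Qed.


Lemma gen p r n (g : 'I_n -> 'rV['F_p]_r) (U : {set 'I_n}) m : prime p ->
  (r * p.-1 + p ^ m <= #|U|)%N ->
  exists T : {set 'I_n},
    [/\ T \subset U, T != set0, \sum_(i in T) g i = 0 & (p ^ m %| #|T|)%N].
Proof.
move=> pp hU.
pose f (T : {set 'I_n}) :=
  ((\sum_(i in T) g i == 0)%:R * (p ^ m %| #|T|)%:R : 'F_p).
have lf : lowdeg (p.-1 * r + (p ^ m - 1)) f.
  exact: lowdeg_mul (lowdeg_zero g pp) (lowdeg_pdiv m n pp).
have hd : (p.-1 * r + (p ^ m - 1) < #|U|)%N.
  have h : (0 < p ^ m)%N by rewrite expn_gt0 prime_gt0.
  move: hU h; rewrite mulnC; lia.
have S := SC lf hd.
case: (boolP [exists T : {set 'I_n}, [&& T \subset U, T != set0,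
    \sum_(i in T) g i == 0 & (p ^ m %| #|T|)%N]]).
  by move/existsP => [T /and4P [a b /eqP c d]]; exists T.
move=> /existsPn H; exfalso.
move: S; rewrite (bigD1 set0) ?sub0set //= big1 ?addr0.
  by rewrite /f cards0 expr0 mul1r big_set0 eqxx dvdn0 mulr1 => /eqP; rewrite oner_eq0.
move=> T /andP [TU T0]; move: (H T); rewrite TU T0 /= /f.
case: (_ == 0); case: (_ %| _)%N => //= _; rewrite ?mulr0 ?mul0r //.
all: by rewrite (mulr0 ((-1) ^+ #|T|)) || rewrite mulr0.
Qed.


Lemma split_zs p r n (g : 'I_n -> 'rV['F_p]_r) (T : {set 'I_n}) : prime p ->
  \sum_(i in T) g i = 0 -> (r * p.-1 + 2 <= #|T|)%N ->
  exists T1 : {set 'I_n}, [/\ T1 \subset T, T1 != set0, T :\: T1 != set0,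
    \sum_(i in T1) g i = 0 & \sum_(i in T :\: T1) g i = 0].
Proof.
move=> pp sT cT.
have [x xT] : exists x, x \in T.
  by apply/card_gt0P; apply: leq_trans cT; rewrite addn2.
have cU : (r * p.-1 + p ^ 0 <= #|T :\ x|)%N.
  by move: cT; rewrite (cardsD1 x T) xT expn0; lia.
have [T1 [T1s T10 sT1 _]] := gen (m:=0) g pp cU.
have T1T : T1 \subset T by apply: subset_trans T1s (subD1set _ _).
exists T1; split=> //.
  apply/set0Pn; exists x; rewrite inE xT andbT.
  by apply/negP => /(subsetP T1s); rewrite !inE eqxx.
move: sT; rewrite (big_setID T1) /= (setIidPr T1T) sT1 add0r.
by [].
Qed.

Lemma short p r n (g : 'I_n -> 'rV['F_p]_r) (U : {set 'I_n}) m L : prime p ->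
  (r * p.-1 + p ^ m <= #|U|)%N ->
  (forall t, (0 < t)%N -> (p ^ m %| t)%N -> (t <= r * p.-1 + p ^ m)%N ->
     (t <= L)%N \/ ((r * p.-1 + 2 <= t)%N /\ (t <= L.*2)%N)) ->
  exists T : {set 'I_n},
    [/\ T \subset U, T != set0, \sum_(i in T) g i = 0 & (#|T| <= L)%N].
Proof.
move=> pp hU ht.
have [U' U'P] : exists U' : {set 'I_n}, U' \in
    [set A : {set 'I_n} | A \subset U & #|A| == (r * p.-1 + p ^ m)%N].
  by apply/card_gt0P; rewrite cards_draws bin_gt0.
move: U'P; rewrite inE => /andP [U'U /eqP cU'].
have [T [TU' T0 sT dT]] := gen (m:=m) g pp (eq_leq (esym cU')).
have TU : T \subset U by apply: subset_trans TU' U'U.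
have cT : (#|T| <= r * p.-1 + p ^ m)%N by rewrite -cU' subset_leq_card.
have cT0 : (0 < #|T|)%N by rewrite card_gt0.
case: (ht _ cT0 dT cT) => [le|[c1 c2]]; first by exists T.
have [T1 [T1T T10 T20 s1 s2]] := split_zs pp sT c1.
have cI := cardsID T1 T; rewrite (setIidPr T1T) in cI.
case: (leqP #|T1| L) => h1.
  by exists T1; split=> //; apply: subset_trans T1T TU.
exists (T :\: T1); split=> //.
  exact: subset_trans (subsetDl _ _) TU.
move: c2; rewrite -cI; lia.
Qed.

Lemma greedy p r n (g : 'I_n -> 'rV['F_p]_r) L : prime p ->
  (forall U : {set 'I_n}, (r * p.-1 + 1 + L <= #|U|)%N ->
     exists T : {set 'I_n},
       [/\ T \subset U, T != set0, \sum_(i in T) g i = 0 & (#|T| <= L)%N]) ->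
  forall k (U : {set 'I_n}), (r * p.-1 + 1 + k * L <= #|U|)%N ->
  exists F : nat -> {set 'I_n},
    (forall j, (j <= k)%N ->
       [/\ F j \subset U, F j != set0 & \sum_(i in F j) g i = 0]) /\
    (forall j j', (j <= k)%N -> (j' <= k)%N -> j != j' ->
       [disjoint F j & F j']).
Proof.
move=> pp hS; elim=> [|k IH] U hU.
  have h0 : (r * p.-1 + p ^ 0 <= #|U|)%N.
    by move: hU; rewrite mul0n expn0 addn0.
  have [T [TU T0 sT _]] := gen (m:=0) g pp h0.
  exists (fun _ => T); split.
    by move=> j _; split.
  by move=> [|j] [|j'].
have h1 : (r * p.-1 + 1 + L <= #|U|)%N.
  by apply: leq_trans hU; rewrite mulSn addnA leq_addr.
have [T [TU T0 sT cT]] := hS U h1.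
have hU' : (r * p.-1 + 1 + k * L <= #|U :\: T|)%N.
  by rewrite cardsDS //; move: hU; rewrite mulSn; lia.
have [F [HF1 HF2]] := IH _ hU'.
exists (fun j => if j == k.+1 then T else F j); split.
  move=> j jk; case: eqP => [_|/eqP jn]; first by split.
  have jk' : (j <= k)%N by rewrite -ltnS ltn_neqAle jn jk.
  have [a b c] := HF1 j jk'; split=> //.
  exact: subset_trans a (subsetDl _ _).
have dT j : (j <= k)%N -> [disjoint T & F j].
  move=> jk; rewrite disjoint_sym disjoints_subset.
  have [a _ _] := HF1 j jk; apply: subset_trans a _.
  by rewrite setDE subsetIr.
move=> j j' jk jk' jj'.
case: eqP => [ej|/eqP nj]; case: eqP => [ej'|/eqP nj'].
- by move: jj'; rewrite ej ej' eqxx.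
- apply: dT; by rewrite -ltnS ltn_neqAle nj' jk'.
- rewrite disjoint_sym; apply: dT; by rewrite -ltnS ltn_neqAle nj jk.
- apply: HF2 => //; by rewrite -ltnS ltn_neqAle ?nj ?nj' ?jk ?jk'.
Qed.

Local Open Scope nat_scope.

Lemma ar_a1 r p k : (1 < r)%N -> (1 < p)%N -> (r * p.-1 + 1 + k * ((r - 1) * p) <= (k.+1 * (r - 1) + 1) * p + 1 - r)%N.
Proof.
move=> hr hp.
case: r hr => [|r] // hr; case: p hp => [|p] // hp.
rewrite subSS subn0 -pred_Sn.
have -> : ((k.+1 * r + 1) * p.+1 + 1 - r.+1 = (k.+1 * r + 1) * p.+1 - r)%N by lia.
rewrite mulSn.
nia.
Qed.

Lemma ar_a2 r p : (1 < r)%N -> (1 < p)%N -> (r * p.-1 + p <= r * p.-1 + 1 + (r - 1) * p)%N.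
Proof.
move=> hr hp; case: r hr => [|r] // hr; rewrite subSS subn0.
have : (p <= r * p)%N by rewrite leq_pmull //; lia.
lia.
Qed.

Lemma ar_a3 r p c : (0 < r)%N -> (1 < p)%N -> (c * p <= r * p.-1 + p)%N -> (c <= r)%N.
Proof.
move=> hr hp h; rewrite leqNgt; apply/negP => hc.
have : (r.+1 * p <= c * p)%N by rewrite leq_mul2r hc orbT.
case: p hp h => [|p] // hp; rewrite -pred_Sn mulSn mulnS.
lia.
Qed.

Lemma ar_a4 r p : (1 < r)%N -> (1 < p)%N ->
  (r * p.-1 + 2 <= r * p)%N /\ (r * p <= ((r - 1) * p).*2)%N.
Proof.
move=> hr hp; case: p hp => [|p] // hp; rewrite -pred_Sn.
case: r hr => [|r] // hr; rewrite subSS subn0 -mul2n mulnA.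
split; first by rewrite [X in (_ <= X)%N]mulnS; lia.
by apply: leq_mul => //; lia.
Qed.

Lemma ar_b3 q c x : (x + 1 < 2 * q)%N -> (c * q <= x + q)%N -> (c <= 2)%N.
Proof.
move=> h1 h2; rewrite leqNgt; apply/negP => hc.
have : (3 * q <= c * q)%N by rewrite leq_mul2r hc orbT.
lia.
Qed.

Local Open Scope ring_scope.

Lemma Dk_le (G : finZmodType) k l : Dk_prop G k l -> (Dk G k <= l)%N.
Proof.
move=> H; rewrite /Dk; case: excluded_middle_informative => [E|_] //.
case: ex_minnP => m _ hm; apply: hm.
by rewrite /Dk_predb; case: excluded_middle_informative.
Qed.

Lemma Dk_prop_mono (G : finZmodType) k l l' :
  (l <= l')%N -> Dk_prop G k l -> Dk_prop G k l'.
Proof. by move=> le H s hs; apply: H; apply: leq_trans le hs. Qed.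

Lemma bound p r k L : prime p ->
  (forall n (g : 'I_n -> 'rV['F_p]_r) (U : {set 'I_n}),
     (r * p.-1 + 1 + L <= #|U|)%N ->
     exists T : {set 'I_n},
       [/\ T \subset U, T != set0, \sum_(i in T) g i = 0 & (#|T| <= L)%N]) ->
  Dk_prop ('rV['F_p]_r : finZmodType) k.+1 (r * p.-1 + 1 + k * L).
Proof.
move=> pp hS s hs.
have hU : (r * p.-1 + 1 + k * L <= #|[set: 'I_(size s)]|)%N.
  by rewrite cardsT card_ord.
have := greedy (g := fun i : 'I_(size s) => s`_i) pp.
move=> /(_ L (hS _ _) k _ hU) [F [HF1 HF2]].
exists (fun j : 'I_k.+1 => F j); split; [|split].
- by move=> j; case: (HF1 j (ltn_ord j)).
- move=> j; have [_ _ e] := HF1 j (ltn_ord j). exact e.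
- move=> j j' jj'; apply: HF2; [by rewrite -ltnS ltn_ord | by rewrite -ltnS ltn_ord |].
  by apply: contra jj' => /eqP e; apply/eqP/val_inj.
Qed.
Lemma Dk0 (G : finZmodType) : Dk_prop G 0 0.
Proof.
move=> s _; exists (fun _ => set0); split; [|split]; by case.
Qed.

Theorem proposition3p5 (p r k m : nat) :
  prime p -> (2 <= r)%N ->
  (r * (p - 1) + 1 < 2 * p ^ m)%N ->
  (Dk ('rV['F_p]_r : finZmodType) k <=
     minn ((k * (r - 1) + 1) * p + 1 - r) ((k - 1) * p ^ m + r * (p - 1) + 1))%N.
Proof.
move=> pp r2 hm.
have p2 := prime_gt1 pp.
rewrite subn1 in hm.
case: k => [|k].
  by have := Dk_le (@Dk0 ('rV['F_p]_r : finZmodType)); rewrite leqn0 => /eqP ->.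
rewrite leq_min; apply/andP; split.
- apply: Dk_le; apply: Dk_prop_mono (bound (L := ((r - 1) * p)%N) pp _).
    exact: ar_a1.
  move=> n g U hU; apply: (@short p r n g U 1 ((r - 1) * p) pp).
    by rewrite expn1; apply: leq_trans hU; apply: ar_a2.
  move=> t t0 /dvdnP [c ->]; rewrite expn1 => ht.
  have cr : (c <= r)%N by apply: ar_a3 ht; lia.
  case: (leqP c (r - 1)) => hc.
    by left; rewrite leq_mul2r hc orbT.
  have -> : c = r by lia.
  by right; apply: ar_a4.
- apply: Dk_le; apply: Dk_prop_mono (bound (L := (p ^ m)%N) pp _).
    by rewrite subSS subn0 -subn1; lia.
  move=> n g U hU; apply: (@short p r n g U m (p ^ m) pp).
    by apply: leq_trans hU; lia.
  move=> t t0 /dvdnP [c ->] ht.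
  have cr : (c <= 2)%N by apply: ar_b3 hm ht.
  case: (leqP c 1) => hc.
    by left; rewrite -{2}(mul1n (p ^ m)%N) leq_mul2r hc orbT.
  have -> : c = 2 by lia.
  right; rewrite mul2n; split => //.
  by move: hm; rewrite mul2n; lia.
Qed.
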